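(* Let $X$ be a non-compact locally compact Hausdorff space. Then the set $\mathrm{AppInv}(C_0(X))$ of approximately invertible elements of $C_0(X)$ has empty interior in $C_0(X)$ (with respect to the sup norm).
   Context: $C_0(X)$ is the algebra of continuous complex functions on $X$ vanishing at infinity, with pointwise operations and the sup norm. An approximate identity in $C_0(X)$ is a net $(e_j)$ with $\|e_jh-h\|_\infty\to 0$ for every $h\in C_0(X)$. An element $f\in C_0(X)$ is approximately invertible if there is a net $(g_j)$ in $C_0(X)$ such that $(fg_j)$ is an approximate identity in $C_0(X)$. *)

(* Defs.v *)
From HB Require Import structures.
From mathcomp Require Import all_boot all_order all_algebra.
From mathcomp Require Import all_classical all_reals all_analysis.
From mathcomp Require Import complex.
Set Implicit Arguments. Unset Strict Implicit. Unset Printing Implicit Defensive.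
Import Order.TTheory GRing.Theory Num.Theory ComplexField.
Local Open Scope classical_set_scope.
Local Open Scope ring_scope.
Local Open Scope complex_scope.

Definition cmod (R : realType) (z : R[i]) : R := ComplexField.Normc.normc z.

Section C0.
Variables (R : realType) (X : topologicalType).

Definition ccontinuous (f : X -> R[i]) : Prop :=
  forall (x : X) (e : R), 0 < e -> \forall y \near x, cmod (f y - f x) < e.

Definition vanishes_at_infinity (f : X -> R[i]) : Prop :=
  forall e : R, 0 < e ->
    exists K : set X, compact K /\ forall x, ~ K x -> cmod (f x) < e.

Definition C0 (f : X -> R[i]) : Prop :=
  ccontinuous f /\ vanishes_at_infinity f.

Definition supnorm (f : X -> R[i]) : R :=
  sup [set cmod (f x) | x in [set: X]].

Definition directed (J : Type) (le : J -> J -> Prop) : Prop :=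
  (exists j : J, True) /\
  (forall j, le j j) /\
  (forall i j k, le i j -> le j k -> le i k) /\
  (forall i j, exists k, le i k /\ le j k).

Definition approx_identity (J : Type) (le : J -> J -> Prop)
    (e : J -> X -> R[i]) : Prop :=
  directed le /\ (forall j, C0 (e j)) /\
  forall h : X -> R[i], C0 h ->
    forall eps : R, 0 < eps -> exists j0, forall j, le j0 j ->
      supnorm (fun x => e j x * h x - h x) < eps.

Definition approx_invertible (f : X -> R[i]) : Prop :=
  C0 f /\
  exists (J : Type) (le : J -> J -> Prop) (g : J -> X -> R[i]),
    (forall j, C0 (g j)) /\ approx_identity le (fun j x => f x * g j x).

End C0.

(* Main.v *)
Require Import Defs.
From HB Require Import structures.
From mathcomp Require Import all_boot all_order all_algebra.
From mathcomp Require Import all_classical all_reals all_analysis.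
From mathcomp Require Import complex.
From mathcomp Require Import ring lra.
Import Order.TTheory GRing.Theory Num.Theory ComplexField.
Local Open Scope classical_set_scope.
Local Open Scope ring_scope.
Local Open Scope complex_scope.

Section Aux.
Context {R : realType}.
Implicit Types a b : R[i].

Lemma nc_ge0 a : 0 <= cmod a.
Proof. by case: a => x y; rewrite /cmod /= sqrtr_ge0. Qed.

Lemma ncD a b : cmod (a + b) <= cmod a + cmod b.
Proof. exact: (@le_normcD R a b). Qed.

Lemma ncN a : cmod (- a) = cmod a.
Proof. exact: (@normcN R a). Qed.

Lemma ncM a b : cmod (a * b) = cmod a * cmod b.
Proof. exact: (@Normc.normcM R a b). Qed.

Lemma nc0 : cmod (0 : R[i]) = 0.
Proof. exact: (@Normc.normc0 R). Qed.

Lemma nc1 : cmod (1 : R[i]) = 1.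
Proof. exact: (@Normc.normc1 R). Qed.

Lemma ncR (x : R) : cmod (x%:C) = `|x|.
Proof. by rewrite /cmod /= expr0n /= addr0 sqrtr_sqr. Qed.

Lemma ncB_dist a b : `|cmod a - cmod b| <= cmod (a - b).
Proof.
rewrite ler_norml; apply/andP; split.
  have := ncD (b - a) a; rewrite subrK -[b - a]opprB ncN; lra.
have := ncD (a - b) b; rewrite subrK; lra.
Qed.
End Aux.
Section L.
Context {R : realType} {X : topologicalType}.
Implicit Types F : X -> R[i].

Lemma C0_bounded F : C0 F -> exists M : R, forall x, cmod (F x) <= M.
Proof.
move=> [cF vF]; have [K [cK HK]] := vF 1 ltr01.
pose phi := fun x => cmod (F x) : R.
have cphi : continuous (phi : X -> R^o).
  move=> x; apply/cvgrPdist_lt => e e0.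
  apply: filterS (cF x e e0) => y Hy; rewrite distrC.
  exact: le_lt_trans (ncB_dist (F y) (F x)) Hy.
have := compact_bounded (continuous_compact (continuous_subspaceT cphi) cK).
move=> [M [_ HM]].
have /= HM1 := HM (M + 1) ltac:(by rewrite ltrDl).
exists (Num.max (M + 1) 1) => x.
have [Kx|nKx] := pselect (K x).
  have : `|phi x| <= M + 1 by apply: HM1; exists x.
  rewrite /phi ger0_norm ?nc_ge0 // => h; by rewrite le_max h.
by rewrite le_max (ltW (HK x nKx)) orbT.
Qed.

Lemma le_supnorm F : (exists M, forall x, cmod (F x) <= M) ->
  forall x, cmod (F x) <= supnorm F.
Proof.
move=> [M HM] x; apply: sup_upper_bound; last by exists x.
split; first by exists (cmod (F x)), x.
by exists M => _ [y _ <-]; exact: HM.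
Qed.

Lemma supnorm_le F b (x0 : X) : (forall x, cmod (F x) <= b) -> supnorm F <= b.
Proof.
move=> H; apply: ge_sup; first by exists (cmod (F x0)), x0.
by move=> _ [y _ <-]; exact: H.
Qed.

Lemma small_point F e : ~ compact [set: X] -> vanishes_at_infinity F -> 0 < e ->
  exists x, cmod (F x) < e.
Proof.
move=> ncX vF e0; have [K [cK HK]] := vF e e0.
apply: contrapT => Hn; apply: ncX.
suff -> : [set: X] = K by [].
apply/seteqP; split=> // x _; apply: contrapT => nK.
by apply: Hn; exists x; exact: HK.
Qed.

Lemma C0_sub F H (c : R[i]) : C0 F -> C0 H -> C0 (fun x => F x - c * H x).
Proof.
move=> [cF vF] [cH vH]; have c0 := nc_ge0 c.
split.
  move=> x e e0.
  have e2 : 0 < e / 2 by rewrite divr_gt0.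
  have d0 : 0 < e / 2 / (cmod c + 1) by rewrite divr_gt0 // ltr_pwDr.
  have cd : (cmod c + 1) * (e / 2 / (cmod c + 1)) = e / 2.
    by field; rewrite gt_eqF // ltr_pwDr.
  set d := e / 2 / (cmod c + 1) in d0 cd.
  near=> y.
  have H1 : cmod (F y - F x) < e / 2 by near: y; exact: cF.
  have H2 : cmod (H y - H x) < d by near: y; exact: cH.
  rewrite (_ : F y - c * H y - (F x - c * H x) = (F y - F x) + - (c * (H y - H x))); last by ring.
  apply: le_lt_trans (ncD _ _) _; rewrite ncN ncM.
  have := nc_ge0 (H y - H x); nra.
move=> e e0.
have e2 : 0 < e / 2 by rewrite divr_gt0.
have d0 : 0 < e / 2 / (cmod c + 1) by rewrite divr_gt0 // ltr_pwDr.
have cd : (cmod c + 1) * (e / 2 / (cmod c + 1)) = e / 2.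
  by field; rewrite gt_eqF // ltr_pwDr.
set d := e / 2 / (cmod c + 1) in d0 cd.
have [K1 [cK1 HK1]] := vF _ e2; have [K2 [cK2 HK2]] := vH _ d0.
exists (K1 `|` K2); split; first exact: compactU.
move=> x nK.
have H1 : cmod (F x) < e / 2 by apply: HK1 => ?; apply: nK; left.
have H2 : cmod (H x) < d by apply: HK2 => ?; apply: nK; right.
apply: le_lt_trans (ncD _ _) _; rewrite ncN ncM.
have := nc_ge0 (H x); nra.
Unshelve. all: by end_near.
Qed.

End L.
Section B.
Variables (R : realType) (X : topologicalType).
Hypothesis hX : hausdorff_space X.
Hypothesis lcX : locally_compact [set: X].

Lemma bump (x0 : X) : exists h : X -> R[i],
  C0 h /\ h x0 = 1 /\ forall x, cmod (h x) <= 1.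
Proof.
have crs := @one_point_compactification_completely_reg X R lcX hX.
have hopc := one_point_compactification_hausdorff lcX hX.
have cl : closed [set (Some x0 : one_point_compactification X)].
  exact: accessible_closed_set1 (hausdorff_accessible hopc) _.
have sep := crs None _ cl (fun h => ltac:(by [])).
pose u := @Urysohn _ R [set (None : one_point_compactification X)]
   [set (Some x0 : one_point_compactification X)].
have u0 : u None = 0 by apply: (Urysohn_sub0 sep); exists None.
have u1 : u (Some x0) = 1 by apply: (Urysohn_sub1 sep); exists (Some x0).
have ur : forall z, 0 <= u z <= 1.
  move=> z; have := @Urysohn_range _ R [set (None : one_point_compactification X)] [set (Some x0 : one_point_compactification X)] (u z) (ex_intro2 _ _ z I erefl).
  by rewrite /= in_itv.
have uc : continuous (u : _ -> R^o) := @Urysohn_continuous _ R _ _.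
exists (fun x => (u (Some x))%:C); split; last split.
- split.
    move=> x e e0.
    have := uc (Some x); move/cvgrPdist_lt => /(_ e e0) Hn.
    have Hn2 : \forall y \near x, `|u (Some x) - u (Some y)| < e := Hn.
    apply: filterS Hn2 => y Hy.
    by rewrite -rmorphB ncR distrC.
  move=> e e0.
  have := uc None; move/cvgrPdist_lt => /(_ e e0).
  case=> U [cU _] HU; exists U; split => // x nU.
  have := HU (Some x) (or_introl (ex_intro2 _ _ x nU erefl)).
  by rewrite ncR u0 sub0r normrN.
- by rewrite u1.
- move=> x; rewrite ncR ger0_norm; have /andP[] := ur (Some x) => //.
Qed.
End B.
Lemma appinv_nozero (R : realType) (X : topologicalType)
  (hX : hausdorff_space X) (lcX : locally_compact [set: X])
  (g : X -> R[i]) (x0 : X) : approx_invertible g -> g x0 = 0 -> False.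
Proof.
move=> [Cg [J [le [gj [Cgj [[[j _] [lrefl _]] [_ AI]]]]]]] g0.
have [h [Ch [h1 hb]]] := @bump R X hX lcX x0.
have [j0 Hj0] := AI h Ch (1/2) ltac:(by []).
have := Hj0 j0 (lrefl j0) => /=.
have [Mg HMg] := C0_bounded _ Cg.
have [Mj HMj] := C0_bounded _ (Cgj j0).
have Mg0 : 0 <= Mg := le_trans (nc_ge0 _) (HMg x0).
have Mj0 : 0 <= Mj := le_trans (nc_ge0 _) (HMj x0).
have B : exists M, forall x, cmod (g x * gj j0 x * h x - h x) <= M.
  exists (Mg * Mj + 1) => x.
  apply: le_trans (ncD _ _) _; rewrite ncN !ncM.
  apply: lerD (hb x).
  rewrite -[Mg * Mj]mulr1.
  apply: ler_pM; rewrite ?mulr_ge0 ?nc_ge0 //.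
  by apply: ler_pM; rewrite ?nc_ge0.
have := le_supnorm _ B x0.
rewrite g0 h1 mul0r mulr1 sub0r ncN nc1.
lra.
Qed.

Theorem proposition3p10 (R : realType) (X : topologicalType)
  (hX : hausdorff_space X) (lcX : locally_compact [set: X])
  (ncX : ~ compact [set: X]) :
  ~ exists (f : X -> R[i]) (r : R),
      approx_invertible f /\ 0 < r /\
      forall g : X -> R[i], C0 g ->
        supnorm (fun x => g x - f x) < r -> approx_invertible g.
Proof.
move=> [f [r [Af [r0 H]]]].
have [Cf _] := Af.
have [x0 hx0] := small_point _ _ ncX Cf.2 r0.
have [h [Ch [h1 hb]]] := @bump R X hX lcX x0.
pose g := fun x => f x - f x0 * h x.
have Cg : C0 g := C0_sub _ _ (f x0) Cf Ch.
have Ag : approx_invertible g.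
  apply: (H g Cg); apply: le_lt_trans _ hx0; apply: (supnorm_le _ _ x0) => x.
  rewrite /g (_ : f x - f x0 * h x - f x = - (f x0 * h x)); last by ring.
  rewrite ncN ncM -[X in _ <= X](mulr1 (cmod (f x0))).
  by rewrite ler_wpM2l ?nc_ge0 ?hb.
by apply: (@appinv_nozero R X hX lcX g x0 Ag); rewrite /g h1 mulr1 subrr.
Qed.
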